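(* Let $n\geqslant 2$, $P=\mathcal F(\Delta^{n-1})$, and $D$ a diagram on $P^*$ with values in finite sets whose associated sheaf $\mathcal D$ is inhabited and flabby. Let $I_0\in P$ satisfy $|D(I_0)|\geqslant 2$ and $|D(J)|=1$ for every nonempty $J\subsetneq I_0$. Write $D(I_0)=A_1\sqcup A_2$ with $A_1,A_2\neq\emptyset$. For $\varepsilon\in\{1,2\}$ define $D_\varepsilon(J)=D(J\geqslant I_0)^{-1}(A_\varepsilon)$ if $J\supseteq I_0$, and $D_\varepsilon(J)=D(J)$ otherwise, with structure maps the restrictions of those of $D$ (so $D_\varepsilon$ is a subdiagram of $D$). Then the sheaves $\mathcal D_1,\mathcal D_2$ associated to $D_1,D_2$ are inhabited and flabby.
   Context: $\mathcal F(\Delta^{n-1})$ is the poset of nonempty subsets of $[n]$ ordered by inclusion; $P^*$ is its reverse. A diagram on $P^*$ assigns finite sets $D(I)$ and maps $D(J\geqslant I)\colon D(J)\to D(I)$ for $I\subseteq J$, functorially. Open sets of the Alexandrov space $X_{P^*}$ are the lower ideals of $P$ (i.e. simplicial subcomplexes of $\Delta^{n-1}$). The associated sheaf assigns to nonempty open $U$ the set $\mathcal D(U)=\{(v_I)_{I\in U}\in\prod_{I\in U}D(I): D(J\geqslant I)(v_J)=v_I\text{ for } I\subseteq J \text{ in }U\}$ with projection restrictions. Inhabited: $\mathcal D(U)\neq\emptyset$ for all nonempty open $U$; flabby: every restriction map $\mathcal D(U)\to\mathcal D(V)$, $\emptyset\neq V\subseteq U$ open, is surjective. *)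

(* Defs.v *)
From mathcomp Require Import all_boot.
Set Implicit Arguments. Unset Strict Implicit. Unset Printing Implicit Defensive.

(* P = F(Delta^{n-1}) : nonempty subsets of [n] = 'I_n, ordered by inclusion.
   Values at set0, or of f I J when ~ I \subset J, are irrelevant junk. *)

Definition is_diagram (n : nat) (D : {set 'I_n} -> finType)
  (f : forall I J : {set 'I_n}, D J -> D I) : Prop :=
  (forall I : {set 'I_n}, I != set0 -> forall x : D I, f I I x = x) /\
  (forall I J K : {set 'I_n}, I != set0 -> I \subset J -> J \subset K ->
     forall x : D K, f I J (f J K x) = f I K x).

(* Open sets of X_{P^*}: lower ideals of P (sets of nonempty faces closed
   under passing to nonempty subfaces). *)
Definition is_open (n : nat) (U : {set {set 'I_n}}) : Prop :=
  (forall I : {set 'I_n}, I \in U -> I != set0) /\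
  (forall I J : {set 'I_n}, J \in U -> I != set0 -> I \subset J -> I \in U).

(* Sections over U of the sheaf associated to the subdiagram S of D
   (S I \subset D I, structure maps restricted from f).  A family
   (v_I)_{I in U} is encoded by a total dependent function v whose values
   outside U are ignored. *)
Definition is_section (n : nat) (D : {set 'I_n} -> finType)
  (f : forall I J : {set 'I_n}, D J -> D I) (S : forall I, {set D I})
  (U : {set {set 'I_n}}) (v : forall I, D I) : Prop :=
  (forall I : {set 'I_n}, I \in U -> v I \in S I) /\
  (forall I J : {set 'I_n}, I \in U -> J \in U -> I \subset J -> f I J (v J) = v I).

Definition sheaf_inhabited (n : nat) (D : {set 'I_n} -> finType)
  (f : forall I J : {set 'I_n}, D J -> D I) (S : forall I, {set D I}) : Prop :=
  forall U, is_open U -> U != set0 -> exists v, is_section f S U v.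

Definition sheaf_flabby (n : nat) (D : {set 'I_n} -> finType)
  (f : forall I J : {set 'I_n}, D J -> D I) (S : forall I, {set D I}) : Prop :=
  forall U V, is_open U -> is_open V -> V != set0 -> V \subset U ->
  forall v, is_section f S V v ->
  exists w, is_section f S U w /\ (forall I : {set 'I_n}, I \in V -> w I = v I).

Definition full_sub (n : nat) (D : {set 'I_n} -> finType) : forall I, {set D I} :=
  fun I => [set: D I].

Definition restr_sub (n : nat) (D : {set 'I_n} -> finType)
  (f : forall I J : {set 'I_n}, D J -> D I) (I0 : {set 'I_n}) (A : {set D I0})
  : forall J, {set D J} :=
  fun J => if I0 \subset J then [set x | f I0 J x \in A] else [set: D J].

(* Main.v *)
Require Import Defs.
From mathcomp Require Import all_boot.

Lemma key (n : nat) (D : {set 'I_n} -> finType)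
  (f : forall I J : {set 'I_n}, D J -> D I) (I0 : {set 'I_n}) :
  is_diagram f -> sheaf_flabby f (full_sub D) -> I0 != set0 ->
  (forall J : {set 'I_n}, J != set0 -> J \proper I0 -> #|{: D J}| = 1) ->
  forall U V, is_open U -> is_open V -> V \subset U -> I0 \in U ->
  forall v, is_section f (full_sub D) V v ->
  forall a, (I0 \in V -> v I0 = a) ->
  exists w, is_section f (full_sub D) U w /\ (forall I, I \in V -> w I = v I)
     /\ w I0 = a.
Proof.
move=> [Hid Hcomp] Hfl HI0 Hsing U V [HU1 HU2] [HV1 HV2] VU I0U v [_ Hv] a Ha.
pose V' := V :|: [set J | (J != set0) && (J \subset I0)].
pose v' := fun J => if J \in V then v J else f J I0 a.
have oV' : is_open V'.
  split.
    move=> I; rewrite !inE => /orP [/HV1 //| /andP [] //].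
  move=> I J; rewrite !inE => /orP [JV IN IJ| /andP [_ JI0] IN IJ].
    by rewrite (HV2 I J JV IN IJ).
  by rewrite IN (subset_trans IJ JI0) orbT.
have V'U : V' \subset U.
  apply/subsetP => J; rewrite !inE => /orP [/(subsetP VU) //| /andP [JN JI0]].
  exact: (HU2 J I0 I0U JN JI0).
have V'N : V' != set0.
  by apply/set0Pn; exists I0; rewrite !inE HI0 subxx orbT.
have sv' : is_section f (full_sub D) V' v'.
  split; first by move=> I _; rewrite /full_sub inE.
  move=> I J IV' JV' IJ.
  have IN : I != set0 by case: oV' => H _; apply: H.
  rewrite /v'; case: (boolP (J \in V)) => JV.
    by rewrite (HV2 I J JV IN IJ); apply: Hv => //; apply: HV2 IJ.
  have JI0 : J \subset I0 by move: JV'; rewrite !inE (negbTE JV) => /andP [].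
  rewrite Hcomp //.
  case: (boolP (I \in V)) => // IV.
  case: (boolP (I == I0)) => [/eqP EI | NI].
    subst I. have EJ : J = I0 by apply/eqP; rewrite eqEsubset JI0 IJ.
    by subst J; rewrite IV in JV.
  have := Hsing I IN; rewrite properEneq NI (subset_trans IJ JI0) => /(_ isT).
  move=> Hc; have : #|{: D I}| <= 1 by rewrite Hc.
  by move/fintype_le1P => Hs; apply: (Hs (v I)).
have [w [[_ Hw] Hwv]] := Hfl U V' (conj HU1 HU2) oV' V'N V'U v' sv'.
exists w; split; first by split => // I _; rewrite /full_sub inE.
split.
  by move=> I IV; rewrite Hwv ?inE ?IV // /v' IV.
rewrite Hwv ?inE ?HI0 ?subxx ?orbT // /v'.
by case: (boolP (I0 \in V)) => [/Ha //| _]; rewrite Hid.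
Qed.

Lemma one (n : nat) (D : {set 'I_n} -> finType)
  (f : forall I J : {set 'I_n}, D J -> D I) (I0 : {set 'I_n}) (A : {set D I0}) :
  is_diagram f -> sheaf_inhabited f (full_sub D) -> sheaf_flabby f (full_sub D) ->
  I0 != set0 ->
  (forall J : {set 'I_n}, J != set0 -> J \proper I0 -> #|{: D J}| = 1) ->
  A != set0 ->
  sheaf_inhabited f (restr_sub f A) /\ sheaf_flabby f (restr_sub f A).
Proof.
move=> Hd Hin Hfl HI0 Hsing /set0Pn [a0 a0A].
have [Hid Hcomp] := Hd.
have conv : forall U w, is_open U -> is_section f (full_sub D) U w ->
    (I0 \in U -> w I0 \in A) -> is_section f (restr_sub f A) U w.
  move=> U w [HU1 HU2] [_ Hw] HA; split => // J JU.
  rewrite /restr_sub; case: ifP => [I0J | _]; last by rewrite inE.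
  have I0U := HU2 I0 J JU HI0 I0J.
  by rewrite inE Hw //; apply: HA.
split.
  move=> U oU UN.
  case: (boolP (I0 \in U)) => I0U.
    have oV : is_open (set0 : {set {set 'I_n}}) by split=> I; [rewrite inE | move=> J; rewrite inE].
    have sv : is_section f (full_sub D) set0 (fun J => f J I0 a0).
      by split=> I; [rewrite inE | move=> J; rewrite inE].
    have Ha : I0 \in (set0 : {set {set 'I_n}}) -> f I0 I0 a0 = a0 by rewrite inE.
    have [w [sw [_ wI0]]] := @key _ _ _ _ Hd Hfl HI0 Hsing U set0 oU oV (sub0set U) I0U _ sv _ Ha.
    by exists w; apply: conv => // _; rewrite wI0.
  have [w sw] := Hin U oU UN.
  by exists w; apply: conv => // H; rewrite H in I0U.
move=> U V oU oV VN VU v [Sv Hv].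
have sv : is_section f (full_sub D) V v by split => // I _; rewrite inE.
case: (boolP (I0 \in U)) => I0U.
  pose a := if I0 \in V then v I0 else a0.
  have aA : a \in A.
    rewrite /a; case: ifP => // I0V.
    by have := Sv I0 I0V; rewrite /restr_sub subxx inE Hid.
  have Ha : I0 \in V -> v I0 = a by move=> H; rewrite /a H.
  have [w [sw [wv wI0]]] := @key _ _ _ _ Hd Hfl HI0 Hsing U V oU oV VU I0U v sv a Ha.
  by exists w; split => //; apply: conv => // _; rewrite wI0.
have [w [sw wv]] := Hfl U V oU oV VN VU v sv.
by exists w; split => //; apply: conv => // H; rewrite H in I0U.
Qed.

Theorem lemma6p2 (n : nat) (D : {set 'I_n} -> finType)
  (f : forall I J : {set 'I_n}, D J -> D I)
  (I0 : {set 'I_n}) (A1 A2 : {set D I0}) :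
  2 <= n ->
  is_diagram f ->
  sheaf_inhabited f (full_sub D) ->
  sheaf_flabby f (full_sub D) ->
  I0 != set0 ->
  2 <= #|{: D I0}| ->
  (forall J : {set 'I_n}, J != set0 -> J \proper I0 -> #|{: D J}| = 1) ->
  [disjoint A1 & A2] -> A1 :|: A2 = [set: D I0] ->
  A1 != set0 -> A2 != set0 ->
  (sheaf_inhabited f (restr_sub f A1) /\ sheaf_flabby f (restr_sub f A1)) /\
  (sheaf_inhabited f (restr_sub f A2) /\ sheaf_flabby f (restr_sub f A2)).
Proof.
move=> _ Hd Hin Hfl HI0 _ Hs _ _ N1 N2.
by split; apply: one.
Qed.
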